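(* Consider a Bayesian model with parameter $\theta$, prior $P(\theta)$, and data $\mathcal{D}=(\mathcal{D}_i)_{i=1}^n$ whose elements are conditionally independent given $\theta$ with likelihoods $P(\mathcal{D}_i\mid\theta)$. For each $i$, let $\theta^i_1,\dots,\theta^i_k$ be i.i.d. samples from the posterior $P(\theta\mid\mathcal{D}_{<i})$, and define $$\hat{\mathcal{L}}(\mathcal{D})=\sum_{i=1}^n\frac1k\sum_{j=1}^k\log P(\mathcal{D}_i\mid\theta^i_j),\qquad \hat{\mathcal{L}}_k(\mathcal{D})=\sum_{i=1}^n\log\frac1k\sum_{j=1}^kP(\mathcal{D}_i\mid\theta^i_j).$$ Let $\mathcal{L}(\mathcal{D})=\sum_{i=1}^n\mathbb{E}_{\theta\sim P(\theta\mid\mathcal{D}_{<i})}[\log P(\mathcal{D}_i\mid\theta)]$ and $\mathcal{L}_k(\mathcal{D})=\mathbb{E}[\hat{\mathcal{L}}_k(\mathcal{D})]$. Then $$\mathbb{E}[\hat{\mathcal{L}}(\mathcal{D})]=\mathcal{L}(\mathcal{D})\le\log P(\mathcal{D})\quad\text{and}\quad\mathbb{E}[\hat{\mathcal{L}}_k(\mathcal{D})]=\mathcal{L}_k(\mathcal{D})\le\log P(\mathcal{D}).$$ Further, $$\mathcal{L}(\mathcal{D})=\log P(\mathcal{D})-\sum_{i=1}^n\mathrm{KL}\big(P(\theta\mid\mathcal{D}_{<i})\,\|\,P(\theta\mid\mathcal{D}_{<i+1})\big).$$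
   Context: $\mathcal{D}_{<i}=(\mathcal{D}_j)_{j=1}^{i-1}$ with $\mathcal{D}_{<1}=\emptyset$. $P(\mathcal{D})=\int P(\mathcal{D}\mid\theta)P(\theta)d\theta$ is the marginal likelihood, so that $\log P(\mathcal{D})=\sum_i\log P(\mathcal{D}_i\mid\mathcal{D}_{<i})$ with $P(\mathcal{D}_i\mid\mathcal{D}_{<i})=\mathbb{E}_{\theta\sim P(\theta\mid\mathcal{D}_{<i})}P(\mathcal{D}_i\mid\theta)$. $\mathrm{KL}$ is the Kullback–Leibler divergence. *)

(* Defs.v *)
From HB Require Import structures.
From mathcomp Require Import all_boot all_order all_algebra.
From mathcomp Require Import all_classical all_reals all_analysis.
Set Implicit Arguments. Unset Strict Implicit. Unset Printing Implicit Defensive.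
Import Order.TTheory GRing.Theory Num.Theory.
Local Open Scope classical_set_scope.
Local Open Scope ring_scope.

Section BayesDefs.
Context {R : realType} {d : measure_display} {T : measurableType d}.

(* unnormalised posterior weight after observing D_{<i}:
   w i theta = prod_{j<i} P(D_j | theta)  (conditional independence) *)
Definition lik_prod (l : nat -> T -> R) (i : nat) (x : T) : R :=
  \prod_(j < i) l j x.

Definition marg (P : probability T R) (l : nat -> T -> R) (i : nat) : \bar R :=
  (\int[P]_x (lik_prod l i x)%:E)%E.

(* density of the posterior P(theta | D_{<i}) w.r.t. the prior (Bayes' rule) *)
Definition post_dens (P : probability T R) (l : nat -> T -> R) (i : nat) (x : T) : R :=
  lik_prod l i x / fine (marg P l i).

Definition KL_dens (mu : {measure set T -> \bar R}) (p q : T -> R) : \bar R :=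
  (\int[mu]_x (p x * ln (p x / q x))%:E)%E.

Definition Lcal (P : probability T R) (l : nat -> T -> R) (n : nat) : \bar R :=
  (\sum_(i < n) \int[P]_x (post_dens P l i x * ln (l i x))%:E)%E.
End BayesDefs.

Definition mutually_independent {R : realType} {d d' : measure_display}
  {Om : measurableType d'} {T : measurableType d} {I : eqType}
  (Q : probability Om R) (S : set I) (X : I -> Om -> T) : Prop :=
  forall (s : seq I) (A : I -> set T),
    uniq s -> (forall x, x \in s -> S x) -> (forall x, measurable (A x)) ->
    Q (\bigcap_(x in [set x | x \in s]) (X x @^-1` A x)) =
    (\prod_(x <- s) Q (X x @^-1` A x))%E.

Definition Lhat {R : realType} {d : measure_display} {T : measurableType d} {Om : Type}
  (l : nat -> T -> R) (n k : nat) (th : nat -> nat -> Om -> T) (w : Om) : R :=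
  \sum_(i < n) (k%:R^-1 * \sum_(j < k) ln (l i (th i j w))).

Definition Lhat_k {R : realType} {d : measure_display} {T : measurableType d} {Om : Type}
  (l : nat -> T -> R) (n k : nat) (th : nat -> nat -> Om -> T) (w : Om) : R :=
  \sum_(i < n) ln (k%:R^-1 * \sum_(j < k) l i (th i j w)).

(* Main.v *)
Require Import Defs.
From HB Require Import structures.
From mathcomp Require Import all_boot all_order all_algebra.
From mathcomp Require Import all_classical all_reals all_analysis.
From mathcomp Require Import measurable_realfun ring.
Import Order.TTheory GRing.Theory Num.Theory.
Local Open Scope classical_set_scope.
Local Open Scope ring_scope.
Section dens.
Context d (T : measurableType d) (R : realType).
Variables (mu nu : {measure set T -> \bar R}) (g : T -> R).
Hypotheses (mg : measurable_fun setT g) (g0 : forall x, 0 <= g x)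
  (nuE : forall A, measurable A -> nu A = (\int[mu]_(x in A) (g x)%:E)%E).
Local Open Scope ereal_scope.
Import HBNNSimple.

Lemma dens_cov (f : T -> \bar R) (E : set T) : (forall x, 0 <= f x) ->
    measurable E -> measurable_fun E f ->
  \int[mu]_(x in E) (f x * (g x)%:E) = \int[nu]_(x in E) f x.
Proof.
move=> f0 mE mf.
pose h := nnsfun_approx mE mf.
have mgE : measurable_fun E (EFin \o g) by apply/measurable_EFinP; exact: measurable_funTS.
have -> : \int[nu]_(x in E) f x =
    lim (\int[nu]_(x in E) (EFin \o h n) x @[n --> \oo]).
  have fE x : E x -> f x = lim ((EFin \o h n) x @[n --> \oo]).
    by move=> Ex; apply/esym/cvg_lim => //; exact: cvg_nnsfun_approx.
  under eq_integral => x /[!inE] /fE -> //.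
  apply: monotone_convergence => //.
  - move=> n; apply/measurable_EFinP.
    by apply: (measurable_funS measurableT) => //; exact/measurable_funP.
  - by move=> n x Ex //=; rewrite lee_fin.
  - by move=> x Ex a b ab; rewrite lee_fin; exact/lefP/nd_nnsfun_approx.
have -> : \int[mu]_(x in E) (f x * (g x)%:E) =
    lim (\int[mu]_(x in E) ((EFin \o h n) x * (g x)%:E) @[n --> \oo]).
  have fg x : E x -> f x * (g x)%:E = lim (((EFin \o h n) x * (g x)%:E) @[n --> \oo]).
    by move=> Ex; apply/esym/cvg_lim => //; apply: cvgeZr;
      [by []|exact: cvg_nnsfun_approx].
  under eq_integral => x /[!inE] /fg -> //.
  apply: monotone_convergence => [//| | |].
  - move=> n; apply/emeasurable_funM => //; apply/measurable_funTS.
    exact/measurable_EFinP.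
  - by move=> n x Ex /=; rewrite mule_ge0 ?lee_fin ?g0.
  - by move=> x Ex a b ab/=; rewrite lee_wpmul2r ?lee_fin ?g0//; exact/lefP/nd_nnsfun_approx.
suff suf n : \int[mu]_(x in E) ((EFin \o h n) x * (g x)%:E) =
    \int[nu]_(x in E) (EFin \o h n) x.
  by under eq_fun do rewrite suf.
transitivity (\int[nu]_(x in E)
   (\sum_(y \in range (h n)) (y * \1_(h n @^-1` [set y]) x)%:E)); last first.
  by apply: eq_integral => t tE; rewrite /= fimfunE -fsumEFin.
have indich m r : measurable_fun E (fun x => (r * \1_(h m @^-1` [set r]) x)%:E).
  by apply: (measurable_comp measurableT) => //; exact: measurable_funM.
rewrite ge0_integral_fsum//; last by move=> m y Ey; exact: nnfun_muleindic_ge0.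
transitivity (\int[mu]_(x in E) (\sum_(y \in range (h n))
    (y * \1_(h n @^-1` [set y]) x)%:E * (g x)%:E)).
  under [RHS]eq_integral => x xE.
    rewrite -ge0_mule_fsuml => [|y]; last exact: nnfun_muleindic_ge0.
    rewrite fsumEFin // -(fimfunE _ x); over.
  by [].
rewrite ge0_integral_fsum//; last 2 first.
  - by move=> y; apply: emeasurable_funM => //.
  - by move=> m y Ey; rewrite mule_ge0 ?nnfun_muleindic_ge0 ?lee_fin ?g0.

apply: eq_fsbigr => r rhn.
under [RHS]eq_integral do rewrite EFinM.
rewrite integralZl_indic_nnsfun => //.
under eq_integral do rewrite EFinM -muleA.
rewrite ge0_integralZl//.
- under eq_integral do rewrite muleC.
  rewrite (eq_integral ((EFin \o g) \_ (h n @^-1` [set r]))); last first.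
    by move=> x xE; rewrite epatch_indic.
  by rewrite -integral_mkcondr -nuE// integral_indic// setIC.
- apply: emeasurable_funM; first exact/measurable_EFinP.
  exact: mgE.
- by move=> t Et; rewrite mule_ge0 ?lee_fin ?g0.
- by move: rhn; rewrite inE => -[t _ <-]; rewrite lee_fin.
Qed.
End dens.

Section cov.
Context d d' (T : measurableType d) (Om : measurableType d') (R : realType).
Variables (mu : {measure set Om -> \bar R}) (P : {measure set T -> \bar R}) (phi : Om -> T) (g : T -> R).
Hypotheses (mphi : measurable_fun setT phi) (mg : measurable_fun setT g) (g0 : forall x, 0 <= g x)
  (phiE : forall A, measurable A -> mu (phi @^-1` A) = (\int[P]_(x in A) (g x)%:E)%E).
Local Open Scope ereal_scope.

Lemma cov_ge0 (f : T -> \bar R) : (forall x, 0 <= f x) -> measurable_fun setT f ->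
  \int[mu]_w f (phi w) = \int[P]_x (f x * (g x)%:E).
Proof.
move=> f0 mf.
rewrite (@dens_cov _ _ _ P (pushforward mu phi) g mg g0) //.
rewrite (@ge0_integral_pushforward _ _ _ _ _ phi mphi mu setT f)//.
Qed.

Lemma cov_int (h : T -> R) : measurable_fun setT h ->
  P.-integrable setT (fun x => (g x * h x)%:E) ->
  mu.-integrable setT (fun w => (h (phi w))%:E) /\
  \int[mu]_w (h (phi w))%:E = \int[P]_x (g x * h x)%:E.
Proof.
move=> mh /integrableP[mgh igh].
have mhphi : measurable_fun setT (fun w => (h (phi w))%:E).
  by apply/measurable_EFinP; exact: measurableT_comp.
split.
  apply/integrableP; split => //.
  rewrite (@cov_ge0 (fun x => `|(h x)%:E|)) //; last first.
    by apply/measurableT_comp => //; exact/measurable_EFinP.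
  apply: le_lt_trans igh; rewrite le_eqVlt; apply/orP; left; apply/eqP.
  apply: eq_integral => x _.
  by rewrite -EFinM /= normrM (ger0_norm (g0 x)) mulrC.
rewrite integralE [RHS]integralE.
congr (_ - _).
  transitivity (\int[mu]_w ((EFin \o h)^\+ (phi w))).
    by apply: eq_integral => w _; rewrite !funeposE.
  rewrite (@cov_ge0 (EFin \o h)^\+); last 2 first.
  - by move=> x; exact: funepos_ge0.
  - by apply: measurable_funepos; exact/measurable_EFinP.
  apply: eq_integral => x _.
  rewrite !funeposE maxe_pMl ?lee_fin ?g0 // mul0e /= -EFinM mulrC //.
transitivity (\int[mu]_w ((EFin \o h)^\- (phi w))).
  by apply: eq_integral => w _; rewrite !funenegE.
rewrite (@cov_ge0 (EFin \o h)^\-); last 2 first.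
- by move=> x; exact: funeneg_ge0.
- by apply: measurable_funeneg; exact/measurable_EFinP.
apply: eq_integral => x _.
rewrite !funenegE maxe_pMl ?lee_fin ?g0 // mul0e /=.
by rewrite -EFinM mulrC mulrN.
Qed.
End cov.

Section misc.
Context d (T : measurableType d) (R : realType).
Local Open Scope ereal_scope.
Lemma le_integral_mi (mu : {measure set T -> \bar R}) (f g : T -> \bar R) :
  measurable_fun setT f -> mu.-integrable setT g -> (forall x, f x <= g x) ->
  \int[mu]_x f x <= \int[mu]_x g x.
Proof.
move=> mf /integrableP[mg _] fg.
rewrite integralE [X in _ <= X]integralE; apply: leeB.
  apply: ge0_le_integral => //.
  - exact: measurable_funepos.
  - exact: measurable_funepos.
  - by move=> x _; apply: (@funepos_le _ _ setT) ; by [move=> y _; exact: fg | rewrite inE].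
apply: ge0_le_integral => //.
- exact: measurable_funeneg.
- exact: measurable_funeneg.
- by move=> x _; apply: (@funeneg_le _ _ setT) ; by [move=> y _; exact: fg | rewrite inE].
Qed.
End misc.

Lemma ln_le_lin (R : realType) (c y : R) : 0 < c -> 0 < y -> ln y <= ln c + y / c - 1.
Proof.
move=> c0 y0.
have yc : y = c * (y / c) by rewrite mulrCA divff ?mulr1 // gt_eqF.
rewrite [in leLHS]yc lnM ?posrE ?divr_gt0 // -addrA lerD2l.
have := @le_ln1Dx _ (y / c - 1); rewrite addrCA subrr addr0; apply.
by rewrite ltrBrDl subrr divr_gt0.
Qed.
Theorem proposition4p1 (R : realType) (d d' : measure_display)
  (T : measurableType d) (Om : measurableType d')
  (P : probability T R)                 (* prior P(theta) *)
  (n k : nat) (l : nat -> T -> R)       (* l i theta = P(D_i | theta) *)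
  (Q : probability Om R)                (* probability space of the sampler *)
  (th : nat -> nat -> Om -> T) :        (* th i j = theta^i_j *)
  (0 < k)%N ->
  (forall i, measurable_fun setT (l i)) ->
  (forall i x, 0 < l i x) ->
  (forall i, (i <= n)%N -> (marg P l i < +oo)%E) ->
  (forall i, (i < n)%N ->
     P.-integrable setT (fun x => (post_dens P l i x * ln (l i x))%:E)) ->
  (forall i j, measurable_fun setT (th i j)) ->
  (* theta^i_j ~ P(theta | D_{<i}) *)
  (forall i j A, (i < n)%N -> (j < k)%N -> measurable A ->
     Q (th i j @^-1` A) = (\int[P]_(x in A) (post_dens P l i x)%:E)%E) ->
  (* all the samples are mutually independent *)
  mutually_independent Q [set ij | (ij.1 < n)%N /\ (ij.2 < k)%N]
    (fun ij : nat * nat => th ij.1 ij.2) ->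
  let logPD := ln (fine (marg P l n)) in
  [/\ (\int[Q]_w (Lhat l n k th w)%:E)%E = Lcal P l n,
      (Lcal P l n <= logPD%:E)%E,
      (\int[Q]_w (Lhat_k l n k th w)%:E <= logPD%:E)%E &
      Lcal P l n =
        (logPD%:E - \sum_(i < n) KL_dens P (post_dens P l i) (post_dens P l i.+1))%E].
Proof.
move=> k0 ml l0 mfin pint mth thdist _ logPD.
set m := fun i => fine (marg P l i).
have likpos i x : 0 < lik_prod l i x.
  by rewrite /lik_prod; apply: prodr_gt0 => j _; exact: l0.
have mlik i : measurable_fun setT (lik_prod l i).
  by rewrite /lik_prod; apply: measurable_prod => j _; exact: ml.
have margE i : (i <= n)%N -> marg P l i = (m i)%:E /\ 0 < m i.
  move=> iN.
  have mge0 : (0 <= marg P l i)%E.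
    by apply: integral_ge0 => x _; rewrite lee_fin ltW.
  have mfn : marg P l i \is a fin_num.
    by rewrite ge0_fin_numE // mfin.
  split; first by rewrite /m fineK.
  rewrite /m fine_gt0 // mfin // andbT lt0e mge0 andbT.
  apply/negP => /eqP H0.
  have : ae_eq P setT (fun x => (lik_prod l i x)%:E) (cst 0%E).
    apply/ae_eq_integral_abs => //.
      exact/measurable_EFinP.
    rewrite -[RHS]H0; apply: eq_integral => x _.
    by rewrite gee0_abs // lee_fin ltW.
  case=> N [mN PN0 sN].
  have : (P setT <= P N)%E.
    apply: le_measure; rewrite ?inE //.
    move=> x _; apply: sN => /= /(_ I) /eqP.
    by rewrite eqe gt_eqF.
  by rewrite PN0 probability_setT lee_fin ler10.
have m0 : m 0%N = 1.
  rewrite /m /marg /lik_prod.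
  under eq_integral do rewrite big_ord0.
  rewrite integral_cst //.
  by rewrite mul1e; transitivity (fine (1%E : \bar R)); [congr fine; exact: probability_setT | by []].
have mp i : measurable_fun setT (post_dens P l i).
  by rewrite /post_dens; apply: measurable_funM => //; exact: measurable_cst.
have p0 i x : (i <= n)%N -> 0 <= post_dens P l i x.
  by move=> iN; rewrite /post_dens divr_ge0 // ?ltW // (margE _ iN).2.
have pint1 i : (i <= n)%N -> (\int[P]_x (post_dens P l i x)%:E = 1)%E.
  move=> iN; rewrite /post_dens.
  under eq_integral do rewrite EFinM.
  rewrite ge0_integralZr //; last 3 first.
  - exact/measurable_EFinP.
  - by move=> x _; rewrite lee_fin ltW.
  - by rewrite lee_fin invr_ge0 ltW // (margE _ iN).2.
  rewrite -/(marg P l i) (margE _ iN).1 -EFinM /m mulfV //.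
  by rewrite gt_eqF // (margE _ iN).2.
have mpos i : (i <= n)%N -> 0 < m i by move=> iN; exact: (margE _ iN).2.
have pli_eq i x : post_dens P l i x * l i x = lik_prod l i.+1 x * (m i)^-1.
  by rewrite /post_dens /lik_prod big_ord_recr /= mulrAC.
have pl i : (i < n)%N ->
    (\int[P]_x (post_dens P l i x * l i x)%:E = (m i.+1 / m i)%:E)%E.
  move=> iN.
  under eq_integral do rewrite pli_eq EFinM.
  rewrite ge0_integralZr //; last 3 first.
  - exact/measurable_EFinP.
  - by move=> x _; rewrite lee_fin ltW.
  - by rewrite lee_fin invr_ge0 ltW // mpos // ltnW.
  by rewrite -/(marg P l i.+1) (margE _ iN).1 -EFinM.
have pli i : (i < n)%N ->
    P.-integrable setT (fun x => (post_dens P l i x * l i x)%:E).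
  move=> iN; apply/integrableP; split.
    by apply/measurable_EFinP; exact: measurable_funM.
  rewrite (eq_integral (fun x => (post_dens P l i x * l i x)%:E)); last first.
    by move=> x _; rewrite gee0_abs // lee_fin mulr_ge0 ?p0 ?ltW // ltnW.
  by rewrite pl // ltry.
have pi i : (i <= n)%N -> P.-integrable setT (fun x => (post_dens P l i x)%:E).
  move=> iN; apply/integrableP; split.
    exact/measurable_EFinP.
  rewrite (eq_integral (fun x => (post_dens P l i x)%:E)); last first.
    by move=> x _; rewrite gee0_abs // lee_fin p0.
  by rewrite pint1 // ltry.
set a := fun i => fine (\int[P]_x (post_dens P l i x * ln (l i x))%:E)%E.
have aE i : (i < n)%N ->
    (\int[P]_x (post_dens P l i x * ln (l i x))%:E)%E = (a i)%:E.
  by move=> iN; rewrite /a fineK //; exact: integrable_fin_num (pint i iN).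
set c := fun i => m i.+1 / m i.
have c0 i : (i < n)%N -> 0 < c i.
  by move=> iN; rewrite /c divr_gt0 // mpos // ltnW.
have lnc : \sum_(i < n) ln (c i) = ln (m n).
  transitivity (\sum_(i < n) (ln (m i.+1) - ln (m i))).
    apply: eq_bigr => i _; rewrite /c ln_div // posrE mpos //.
    exact: ltnW.
  by rewrite -(big_mkord xpredT (fun i => ln (m i.+1) - ln (m i))) telescope_sumr // m0 ln1 subr0.
have KL i : (i < n)%N ->
    KL_dens P (post_dens P l i) (post_dens P l i.+1) = (ln (c i) - a i)%:E.
  move=> iN; rewrite /KL_dens.
  have pw x : post_dens P l i x * ln (post_dens P l i x / post_dens P l i.+1 x)
      = ln (c i) * post_dens P l i x - post_dens P l i x * ln (l i x).
    have -> : post_dens P l i x / post_dens P l i.+1 x = c i / l i x.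
      rewrite /post_dens /c /lik_prod big_ord_recr /= -/(lik_prod l i x).
      rewrite -/(m i) -/(m i.+1).
      have := likpos i x; have := l0 i x; have := mpos i (ltnW iN);
        have := mpos _ iN.
      move=> h1 h2 h3 h4; field.
      by rewrite !gt_eqF.
    rewrite ln_div ?posrE ?c0 ?l0 //; ring.
  under eq_integral do rewrite pw EFinB.
  rewrite integralB_EFin //; last 2 first.
  - have -> : EFin \o (fun x => ln (c i) * post_dens P l i x) =
        (fun x => (ln (c i))%:E * (post_dens P l i x)%:E)%E.
      by apply/funext => x; rewrite /= EFinM.
    by apply: integrableZl => //; exact: pi (ltnW iN).
  - exact: pint.
  under eq_integral do rewrite EFinM.
  rewrite integralZl //; last exact: pi (ltnW iN).
  by rewrite pint1 ?(ltnW iN) // mule1 aE.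
have LcalE : Lcal P l n = (\sum_(i < n) a i)%:E.
  by rewrite /Lcal -sumEFin; apply: eq_bigr => i _; exact: aE (ltn_ord i).
have logE : logPD = ln (m n) by [].
have ale i : (i < n)%N -> a i <= ln (c i).
  move=> iN; rewrite -lee_fin -aE //.
  have i1 : P.-integrable setT (fun x => ((ln (c i) - 1) * post_dens P l i x)%:E).
    under eq_fun do rewrite EFinM.
    by apply: integrableZl => //; exact: pi (ltnW iN).
  have i2 : P.-integrable setT (fun x => ((c i)^-1 * (post_dens P l i x * l i x))%:E).
    under eq_fun do rewrite EFinM.
    by apply: integrableZl => //; exact: pli.
  apply: (@le_trans _ _ (\int[P]_x ((((ln (c i) - 1) * post_dens P l i x)%:E) +
                     (((c i)^-1 * (post_dens P l i x * l i x))%:E)))%E).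
    apply: le_integral => //.
    - exact: pint.
    - exact: integrableD.
    move=> x _; rewrite -EFinD lee_fin.
    have H := @ln_le_lin _ _ _ (c0 i iN) (l0 i x).
    apply: le_trans (ler_wpM2l (p0 i x (ltnW iN)) H) _.
    rewrite le_eqVlt; apply/orP; left; apply/eqP.
    have := c0 i iN => hc; field; by rewrite gt_eqF.
  rewrite integralD //.
  have e1 : (\int[P]_x ((ln (c i) - 1) * post_dens P l i x)%:E = (ln (c i) - 1)%:E)%E.
    under eq_integral do rewrite EFinM.
    rewrite integralZl //; last exact: pi (ltnW iN).
    by rewrite pint1 ?(ltnW iN) // mule1.
  have e2 : (\int[P]_x ((c i)^-1 * (post_dens P l i x * l i x))%:E = ((c i)^-1 * c i)%:E)%E.
    under eq_integral do rewrite EFinM.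
    rewrite integralZl //; last exact: pli.
    by rewrite pl // -EFinM.
  rewrite e1 e2 -EFinD lee_fin.
  by rewrite mulVf ?subrK // gt_eqF // c0.
have C4 : Lcal P l n =
    (logPD%:E - \sum_(i < n) KL_dens P (post_dens P l i) (post_dens P l i.+1))%E.
  rewrite LcalE (eq_bigr (fun i : 'I_n => (ln (c i) - a i)%:E)); last first.
    by move=> i _; exact: KL.
  by rewrite sumEFin -EFinB sumrB lnc logE opprB addrCA subrr addr0.
have C2 : (Lcal P l n <= logPD%:E)%E.
  by rewrite LcalE logE -lnc lee_fin; apply: ler_sum => i _; exact: ale.
have cv i j (h : T -> R) : (i < n)%N -> (j < k)%N -> measurable_fun setT h ->
    P.-integrable setT (fun x => (post_dens P l i x * h x)%:E) ->
    Q.-integrable setT (fun w => (h (th i j w))%:E) /\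
    (\int[Q]_w (h (th i j w))%:E = \int[P]_x (post_dens P l i x * h x)%:E)%E.
  move=> iN jK mh hi.
  apply: (@cov_int _ _ _ _ _ Q P (th i j) (post_dens P l i)) => //.
  - by move=> x; exact: p0 (ltnW iN).
  - by move=> A mA; exact: thdist.
have mlnl i : measurable_fun setT (fun x => ln (l i x)).
  by apply: measurableT_comp => //; exact: measurable_ln.
have kinv : k%:R^-1 * k%:R = 1 :> R by rewrite mulVf // pnatr_eq0 -lt0n.
have rowE (i : 'I_n) :
    Q.-integrable setT (fun w => (k%:R^-1 * \sum_(j < k) ln (l i (th i j w)))%:E) /\
    (\int[Q]_w (k%:R^-1 * \sum_(j < k) ln (l i (th i j w)))%:E = (a i)%:E)%E.
  have e : (fun w => (k%:R^-1 * \sum_(j < k) ln (l i (th i j w)))%:E) =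
      (fun w => (k%:R^-1)%:E * \sum_(j < k) (ln (l i (th i j w)))%:E)%E.
    by apply/funext => w; rewrite sumEFin EFinM.
  have ij (j : 'I_k) := cv i j _ (ltn_ord i) (ltn_ord j) (mlnl i) (pint i (ltn_ord i)).
  have isum : Q.-integrable setT (fun w => \sum_(j < k) (ln (l i (th i j w)))%:E)%E.
    by apply: integrable_sum => [|j _]; [exact: measurableT | exact: (ij j).1].
  rewrite e; split; first exact: integrableZl.
  rewrite integralZl // integral_sum //; last by move=> j; exact: (ij j).1.
  rewrite (eq_bigr (fun _ => (a i)%:E)); last first.
    by move=> j _; rewrite (ij j).2 aE.
  by rewrite sumEFin sumr_const card_ord -EFinM -[a i *+ k]mulr_natr mulrCA kinv mulr1.
have C1 : (\int[Q]_w (Lhat l n k th w)%:E)%E = Lcal P l n.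
  rewrite LcalE /Lhat.
  under eq_integral do rewrite -sumEFin.
  rewrite integral_sum //; last by move=> i; exact: (rowE i).1.
  by rewrite -sumEFin; apply: eq_bigr => i _; exact: (rowE i).2.
have Xpos i w : 0 < k%:R^-1 * \sum_(j < k) l i (th i j w).
  rewrite mulr_gt0 // ?invr_gt0 ?ltr0n //.
  move: k0; case: (k) => // k' _; rewrite big_ord_recl.
  apply: (lt_le_trans (l0 i (th i 0%N w))); rewrite lerDl.
  by apply: sumr_ge0 => j _; exact: ltW.
pose B w := \sum_(i < n) ((ln (c i) - 1) + (c i)^-1 * (k%:R^-1 * \sum_(j < k) l i (th i j w))).
have LkB w : Lhat_k l n k th w <= B w.
  rewrite /Lhat_k /B; apply: ler_sum => i _.
  apply: le_trans (@ln_le_lin _ _ _ (c0 i (ltn_ord i)) (Xpos i w)) _.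
  rewrite le_eqVlt; apply/orP; left; apply/eqP.
  have := c0 i (ltn_ord i) => hc; field.
  by rewrite (gt_eqF hc) andbT pnatr_eq0 -lt0n.
have mLk : measurable_fun setT (fun w => (Lhat_k l n k th w)%:E).
  apply/measurable_EFinP; rewrite /Lhat_k; apply: measurable_sum => i.
  apply: measurableT_comp; first exact: measurable_ln.
  apply: measurable_funM; first exact: measurable_cst.
  apply: measurable_sum => j; apply: measurableT_comp => //; exact: ml.
have termE (i : 'I_n) :
    Q.-integrable setT (fun w => ((ln (c i) - 1) + (c i)^-1 * (k%:R^-1 * \sum_(j < k) l i (th i j w)))%:E) /\
    (\int[Q]_w ((ln (c i) - 1) + (c i)^-1 * (k%:R^-1 * \sum_(j < k) l i (th i j w)))%:E = (ln (c i))%:E)%E.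
  have e : (fun w => ((ln (c i) - 1) + (c i)^-1 * (k%:R^-1 * \sum_(j < k) l i (th i j w)))%:E) =
      (fun w => (ln (c i) - 1)%:E + ((c i)^-1 * k%:R^-1)%:E * \sum_(j < k) (l i (th i j w))%:E)%E.
    by apply/funext => w; rewrite sumEFin -EFinM -EFinD mulrA.
  have ij (j : 'I_k) := cv i j _ (ltn_ord i) (ltn_ord j) (ml i) (pli i (ltn_ord i)).
  have isum : Q.-integrable setT (fun w => \sum_(j < k) (l i (th i j w))%:E)%E.
    by apply: integrable_sum => [|j _]; [exact: measurableT | exact: (ij j).1].
  have icst : Q.-integrable setT (fun w : Om => (ln (c i) - 1)%:E).
    exact: (finite_measure_integrable_cst _ (ln (c i) - 1) measurableT).
  rewrite e; split.
    by apply: integrableD => //; exact: integrableZl.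
  rewrite integralD //; last exact: integrableZl.
  rewrite integralZl // integral_sum //; last by move=> j; exact: (ij j).1.
  rewrite (eq_bigr (fun _ => (c i)%:E)); last first.
    by move=> j _; rewrite (ij j).2 pl.
  rewrite integral_cst //.
  set q := (X in ((_ * X) + _)%E).
  have -> : q = 1%E by exact: probability_setT.
  rewrite mule1 sumEFin sumr_const card_ord -EFinM -EFinD -[c i *+ k]mulr_natr.
  have := c0 i (ltn_ord i) => hc.
  congr EFin; field.
  by rewrite (gt_eqF hc) andbT pnatr_eq0 -lt0n.
have Bint : Q.-integrable setT (fun w => (B w)%:E).
  rewrite /B; under eq_fun do rewrite -sumEFin.
  by apply: integrable_sum => [|i _]; [exact: measurableT | exact: (termE i).1].
have C3 : (\int[Q]_w (Lhat_k l n k th w)%:E <= logPD%:E)%E.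
  apply: le_trans (@le_integral_mi _ _ _ Q _ (fun w => (B w)%:E) mLk Bint _) _.
    by move=> w; rewrite lee_fin.
  rewrite /B; under eq_integral do rewrite -sumEFin.
  rewrite integral_sum //; last by move=> i; exact: (termE i).1.
  rewrite (eq_bigr (fun i : 'I_n => (ln (c i))%:E)); last by move=> i _; exact: (termE i).2.
  by rewrite sumEFin lnc logE.
by split.
Qed.
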